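(* Let $\operatorname{sinc}(x)=\frac{\sin(\pi x)}{\pi x}$ for $x\neq 0$ and $\operatorname{sinc}(0)=1$. Let $\tau\in(0,1)$ and, for an integer $n\ge 1$, define \[ G(n,\tau)\;=\;\sum_{t\in\mathbb{Z}\setminus\{0\}}\operatorname{sinc}(t-\tau)^n \;=\;\sum_{t=1}^{\infty}\operatorname{sinc}(t-\tau)^n+\sum_{t=1}^{\infty}\operatorname{sinc}(-t-\tau)^n . \] Then \[ G(n,\tau)=\begin{cases} 1-\operatorname{sinc}(\tau) & \text{if } n=1,\\[2pt] \operatorname{sinc}(\tau)^n\Big(\tau^n\big(\zeta(n,\tau)+\zeta(n,-\tau)\big)-2\Big) & \text{if } n \text{ is even},\\[2pt] \operatorname{sinc}(\tau)^n\Big(\tau^n\big(\zeta^*(n,\tau)-\zeta^*(n,-\tau)\big)-2\Big) & \text{if } n\ge 3 \text{ is odd}. \end{cases} \]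
   Context: For an integer $s\ge 2$ and a real number $q$ that is not a non-positive integer, the Hurwitz zeta function is $\zeta(s,q)=\sum_{k=0}^{\infty}\frac{1}{(k+q)^s}$ and the alternating Hurwitz zeta function is $\zeta^*(s,q)=\sum_{k=0}^{\infty}\frac{(-1)^k}{(k+q)^s}$ (in particular these series are used with $q=\tau$ and $q=-\tau$, $\tau\in(0,1)$). *)

(* Defs.v *)
From Stdlib Require Import Reals Lra.
From Coquelicot Require Import Coquelicot.
Open Scope R_scope.

Definition sinc (x : R) : R :=
  if Req_EM_T x 0 then 1 else sin (PI * x) / (PI * x).

Definition hurwitz_zeta (s : nat) (q : R) : R :=
  Series (fun k : nat => / (INR k + q) ^ s).

Definition alt_hurwitz_zeta (s : nat) (q : R) : R :=
  Series (fun k : nat => (-1) ^ k / (INR k + q) ^ s).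

Definition G_pos (n : nat) (tau : R) : nat -> R :=
  fun k => sinc (INR (S k) - tau) ^ n.
Definition G_neg (n : nat) (tau : R) : nat -> R :=
  fun k => sinc (- INR (S k) - tau) ^ n.

Definition G (n : nat) (tau : R) : R :=
  Series (G_pos n tau) + Series (G_neg n tau).

(* Main.v *)
Require Import Defs.
From Stdlib Require Import Reals Lra Lia.
From Coquelicot Require Import Coquelicot.
Open Scope R_scope.

Lemma sin_shift m x : sin (x + INR m * PI) = (-1)^m * sin x.
Proof.
  induction m as [|m IH].
  - simpl. rewrite Rmult_0_l, Rplus_0_r. ring.
  - rewrite S_INR. replace (x + (INR m + 1) * PI) with ((x + INR m * PI) + PI) by ring.
    rewrite neg_sin, IH. simpl. ring.
Qed.

Lemma sin_shiftm m x : sin (x - INR m * PI) = (-1)^m * sin x.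
Proof.
  assert (H := sin_shift m (x - INR m * PI)).
  replace (x - INR m * PI + INR m * PI) with x in H by ring.
  rewrite H, <- Rmult_assoc, <- Rpow_mult_distr.
  replace (-1 * -1) with 1 by ring. rewrite pow1. ring.
Qed.

Lemma sin_mPI m : sin (INR m * PI) = 0.
Proof. rewrite <- (Rplus_0_l (INR m * PI)), sin_shift, sin_0. ring. Qed.

Lemma is_RInt_derive_R (F f : R -> R) a b v :
  (forall x, Rmin a b <= x <= Rmax a b -> is_derive F x (f x)) ->
  (forall x, Rmin a b <= x <= Rmax a b -> continuous f x) ->
  F b - F a = v -> is_RInt f a b v.
Proof. intros H1 H2 <-. exact (is_RInt_derive F f a b H1 H2). Qed.

Lemma is_RInt_plus_R (f g : R -> R) a b l1 l2 :
  is_RInt f a b l1 -> is_RInt g a b l2 -> is_RInt (fun x => f x + g x) a b (l1 + l2).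
Proof. intros. exact (is_RInt_plus f g a b l1 l2 H H0). Qed.

Lemma is_RInt_minus_R (f g : R -> R) a b l1 l2 :
  is_RInt f a b l1 -> is_RInt g a b l2 -> is_RInt (fun x => f x - g x) a b (l1 - l2).
Proof. intros. exact (is_RInt_minus f g a b l1 l2 H H0). Qed.

Fixpoint Dk (j : nat) (x : R) : R :=
  match j with O => / 2 | S j' => Dk j' x + cos (INR (S j') * x) end.

Definition FS (N : nat) (x : R) : R := sum_f_R0 (fun j => Dk j x) N.

Lemma idA j x : 2 * sin (x / 2) * Dk j x = sin ((INR j + / 2) * x).
Proof.
  induction j as [|j IH].
  - simpl. replace ((0 + /2) * x) with (x/2) by field. field.
  - change (Dk (S j) x) with (Dk j x + cos (INR (S j) * x)). rewrite Rmult_plus_distr_l, IH.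
    replace ((INR j + / 2) * x) with (INR (S j) * x - x/2) by (rewrite S_INR; field).
    replace ((INR (S j) + / 2) * x) with (INR (S j) * x + x/2) by field.
    rewrite sin_minus, sin_plus. ring.
Qed.

Lemma idB j x : 2 * sin (x / 2) * sin ((INR j + / 2) * x) = cos (INR j * x) - cos (INR (S j) * x).
Proof.
  replace (INR j * x) with ((INR j + / 2) * x - x/2) by field.
  replace (INR (S j) * x) with ((INR j + / 2) * x + x/2) by (rewrite S_INR; field).
  rewrite cos_minus, cos_plus. ring.
Qed.

Lemma idC N x : 4 * sin (x/2) ^ 2 * FS N x = 1 - cos (INR (S N) * x).
Proof.
  induction N as [|N IH]; unfold FS in *.
  - cbn [sum_f_R0].
    replace (4 * sin (x/2) ^ 2 * Dk 0 x) with (2 * sin (x/2) * (2 * sin (x/2) * Dk 0 x)) by ring.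
    rewrite idA, idB. simpl INR. rewrite Rmult_0_l, cos_0. ring.
  - cbn [sum_f_R0]. rewrite Rmult_plus_distr_l, IH.
    replace (4 * sin (x/2) ^ 2 * Dk (S N) x) with (2 * sin (x/2) * (2 * sin (x/2) * Dk (S N) x)) by ring.
    rewrite idA, idB. ring.
Qed.

Lemma one_minus_cos x : 1 - cos x = 2 * sin (x/2) ^ 2.
Proof.
  assert (H := idB 0 x). simpl INR in H.
  rewrite Rmult_0_l, cos_0, Rmult_1_l in H.
  replace ((0 + /2) * x) with (x/2) in H by field. rewrite <- H. ring.
Qed.

Lemma cos_mono u v : 0 <= u -> u <= v -> v <= PI -> cos v <= cos u.
Proof.
  intros. destruct (Req_dec u v). subst; lra.
  left. apply cos_decreasing_1; lra.
Qed.

Lemma bound_int a N x : 0 < a < 1 -> -PI <= x <= PI ->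
  0 <= (1 - cos (a * x)) * FS N x <= 1.
Proof.
  intros Ha Hx.
  assert (Hc : cos x <= cos (a * x)).
  { destruct (Rle_dec 0 x).
    - apply cos_mono; nra.
    - rewrite <- (cos_neg x), <- (cos_neg (a*x)). apply cos_mono; nra. }
  assert (Hk : (1 - cos x) * FS N x = (1 - cos (INR (S N) * x)) / 2).
  { rewrite one_minus_cos. rewrite <- idC. field. }
  assert (B1 := COS_bound (a * x)). assert (B2 := COS_bound (INR (S N) * x)).
  destruct (Req_dec (1 - cos x) 0) as [E|E].
  - replace (1 - cos (a*x)) with 0 by lra. lra.
  - assert (HF : 0 <= FS N x).
    { assert (0 < 1 - cos x) by (assert (B3 := COS_bound x); lra).
      replace (FS N x) with ((1 - cos (INR (S N) * x)) / 2 / (1 - cos x)).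
      + apply Rdiv_le_0_compat; lra.
      + rewrite <- Hk. field. lra. }
    split.
    + apply Rmult_le_pos; lra.
    + apply Rle_trans with ((1 - cos x) * FS N x).
      * apply Rmult_le_compat_r; lra.
      * rewrite Hk. lra.
Qed.

Lemma int_D j : is_RInt (Dk j) (-PI) PI PI.
Proof.
  induction j as [|j IH].
  - apply (is_RInt_derive_R (fun x => x / 2)).
    + intros x _. change (Dk 0 x) with (/2). auto_derive; auto. field.
    + intros x _. apply continuous_const.
    + field.
  - set (b := INR (S j)).
    assert (Hb : b <> 0) by (unfold b; apply not_0_INR; discriminate).
    assert (Hc : is_RInt (fun x => cos (b * x)) (-PI) PI 0).
    { apply (is_RInt_derive_R (fun x => sin (b * x) / b)).
      + intros x _. auto_derive; auto. field; auto.
      + intros x _. apply (@ex_derive_continuous R_AbsRing R_NormedModule). auto_derive; auto.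
      + replace (b * -PI) with (- (INR (S j) * PI)) by (unfold b; ring).
        unfold b. rewrite sin_neg, sin_mPI. field. apply not_0_INR; discriminate. }
    replace PI with (PI + 0) at 3 by ring.
    eapply is_RInt_ext; [| exact (is_RInt_plus_R _ _ _ _ _ _ IH Hc)].
    intros x _. reflexivity.
Qed.

Fixpoint Pf (a : R) (j : nat) : R :=
  match j with O => / a | S j' => Pf a j' + (-1)^(S j') * (2 * a / (a^2 - (INR (S j'))^2)) end.

Lemma cc_id a b x : cos (a * x) * cos (b * x) = (cos ((a - b) * x) + cos ((a + b) * x)) / 2.
Proof.
  replace ((a - b) * x) with (a * x - b * x) by ring.
  replace ((a + b) * x) with (a * x + b * x) by ring.
  rewrite cos_minus, cos_plus. field.
Qed.

Lemma int_cc a m : 0 < a < 1 -> (1 <= m)%nat ->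
  is_RInt (fun x => cos (a * x) * cos (INR m * x)) (-PI) PI
     ((-1)^m * sin (PI * a) * (2 * a / (a^2 - (INR m)^2))).
Proof.
  intros Ha Hm. set (b := INR m).
  assert (Hb : 1 <= b) by (unfold b; apply (le_INR 1); auto).
  assert (H1 : a - b <> 0) by lra. assert (H2 : a + b <> 0) by lra.
  apply (is_RInt_derive_R (fun x => sin ((a - b) * x) / (2 * (a - b)) + sin ((a + b) * x) / (2 * (a + b)))).
  - intros x _. auto_derive; auto. rewrite cc_id. field; auto.
  - intros x _. apply (@ex_derive_continuous R_AbsRing R_NormedModule). auto_derive; auto.
  - replace ((a - b) * -PI) with (- (PI * a - b * PI)) by ring.
    replace ((a + b) * -PI) with (- (PI * a + b * PI)) by ring.
    replace ((a - b) * PI) with (PI * a - b * PI) by ring.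
    replace ((a + b) * PI) with (PI * a + b * PI) by ring.
    rewrite !sin_neg. unfold b. rewrite sin_shift, sin_shiftm. fold b.
    field. split; [|split]; auto.
    replace (a^2 - b^2) with ((a - b) * (a + b)) by ring. apply Rmult_integral_contrapositive; auto.
Qed.

Lemma int_cD a j : 0 < a < 1 ->
  is_RInt (fun x => cos (a * x) * Dk j x) (-PI) PI (sin (PI * a) * Pf a j).
Proof.
  intros Ha. induction j as [|j IH].
  - apply (is_RInt_derive_R (fun x => sin (a * x) / (2 * a))).
    + intros x _. change (Dk 0 x) with (/2). auto_derive; auto. field. lra.
    + intros x _. change (Dk 0 x) with (/2). apply (@ex_derive_continuous R_AbsRing R_NormedModule). auto_derive; auto; apply ex_derive_const.
    + cbv beta. replace (a * -PI) with (- (PI * a)) by ring. replace (a * PI) with (PI * a) by ring.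
      rewrite sin_neg. simpl. field. lra.
  - assert (Hc := int_cc a (S j) Ha (le_n_S _ _ (Nat.le_0_l j))).
    assert (HH := is_RInt_plus_R _ _ _ _ _ _ IH Hc).
    eapply is_RInt_ext; [| replace (sin (PI * a) * Pf a (S j)) with
        (sin (PI * a) * Pf a j + (-1) ^ S j * sin (PI * a) * (2 * a / (a ^ 2 - INR (S j) ^ 2))) ; [exact HH|] ].
    + intros x _. assert (E : cos (a * x) * Dk j x + cos (a * x) * cos (INR (S j) * x) = cos (a * x) * (Dk j x + cos (INR (S j) * x))) by ring.
      exact E.
    + change (Pf a (S j)) with (Pf a j + (-1)^(S j) * (2 * a / (a^2 - (INR (S j))^2))). ring.
Qed.

Lemma int_FS N : is_RInt (FS N) (-PI) PI (INR (S N) * PI).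
Proof.
  induction N as [|N IH].
  - eapply is_RInt_ext; [| replace (INR 1 * PI) with PI by (simpl; ring); exact (int_D 0)].
    intros x _. reflexivity.
  - assert (HH := is_RInt_plus_R _ _ _ _ _ _ IH (int_D (S N))).
    eapply is_RInt_ext; [| replace (INR (S (S N)) * PI) with (INR (S N) * PI + PI) by (rewrite (S_INR (S N)); ring); exact HH].
    intros x _. reflexivity.
Qed.

Lemma int_cFS a N : 0 < a < 1 ->
  is_RInt (fun x => cos (a * x) * FS N x) (-PI) PI (sin (PI * a) * sum_f_R0 (Pf a) N).
Proof.
  intros Ha. induction N as [|N IH].
  - eapply is_RInt_ext; [| exact (int_cD a 0 Ha)]. intros x _. reflexivity.
  - assert (HH := is_RInt_plus_R _ _ _ _ _ _ IH (int_cD a (S N) Ha)).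
    eapply is_RInt_ext; [| replace (sin (PI * a) * sum_f_R0 (Pf a) (S N)) with
       (sin (PI * a) * sum_f_R0 (Pf a) N + sin (PI * a) * Pf a (S N)) by (cbn [sum_f_R0]; ring); exact HH].
    intros x _. unfold FS. cbn [sum_f_R0].
    assert (E : cos (a * x) * sum_f_R0 (fun j => Dk j x) N + cos (a * x) * Dk (S N) x =
                cos (a * x) * (sum_f_R0 (fun j => Dk j x) N + Dk (S N) x)) by ring.
    exact E.
Qed.

Lemma err a N : 0 < a < 1 ->
  0 <= INR (S N) * PI - sin (PI * a) * sum_f_R0 (Pf a) N <= 2 * PI.
Proof.
  intros Ha.
  assert (HH := is_RInt_minus_R _ _ _ _ _ _ (int_FS N) (int_cFS a N Ha)).
  assert (HG : is_RInt (fun x => (1 - cos (a * x)) * FS N x) (-PI) PI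
                 (INR (S N) * PI - sin (PI * a) * sum_f_R0 (Pf a) N)).
  { eapply is_RInt_ext; [| exact HH]. intros x _.
    assert (E : FS N x - cos (a * x) * FS N x = (1 - cos (a * x)) * FS N x) by ring. exact E. }
  assert (Hex : ex_RInt (fun x => (1 - cos (a * x)) * FS N x) (-PI) PI) by (eexists; exact HG).
  rewrite <- (is_RInt_unique _ _ _ _ HG).
  assert (PIpos := PI_RGT_0).
  split.
  - apply RInt_ge_0; [lra | exact Hex |]. intros x Hx. apply bound_int; lra.
  - assert (H := abs_RInt_le_const _ (-PI) PI 1 ltac:(lra) Hex).
    assert (H' : Rabs (RInt (fun x => (1 - cos (a * x)) * FS N x) (- PI) PI) <= (PI - - PI) * 1).
    { apply H. intros t Ht. assert (Hb := bound_int a N t Ha Ht). rewrite Rabs_right; lra. }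
    apply Rabs_le_between in H'. lra.
Qed.

Lemma lim_inv c b : 0 < b -> is_lim_seq (fun k => c / (INR k + b)) 0.
Proof.
  intros Hb. apply is_lim_seq_Reals. intros eps Heps.
  destruct (archimed_cor1 (eps / (Rabs c + 1))) as [N [HN1 HN2]].
  { apply Rdiv_lt_0_compat; auto. assert (0 <= Rabs c) by apply Rabs_pos. lra. }
  exists N. intros n Hn. unfold R_dist. rewrite Rminus_0_r.
  assert (HNp : 0 < INR N) by (apply lt_0_INR; auto).
  assert (HnN : INR N <= INR n) by (apply le_INR; lia).
  assert (Hc := Rabs_pos c).
  unfold Rdiv. rewrite Rabs_mult, Rabs_inv, (Rabs_right (INR n + b)) by lra.
  apply Rle_lt_trans with (Rabs c * / INR N).
  - apply Rmult_le_compat_l; auto. apply Rinv_le_contravar; lra.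
  - apply Rle_lt_trans with (Rabs c * (eps / (Rabs c + 1))).
    + apply Rmult_le_compat_l; lra.
    + unfold Rdiv. rewrite <- Rmult_assoc.
      apply Rlt_le_trans with ((Rabs c + 1) * eps * / (Rabs c + 1)).
      * apply Rmult_lt_compat_r. apply Rinv_0_lt_compat; lra. nra.
      * right. field. lra.
Qed.

Lemma cesaro_lim a : 0 < a < 1 ->
  is_lim_seq (fun N => sum_f_R0 (Pf a) N / INR (S N)) (PI / sin (PI * a)).
Proof.
  intros Ha.
  assert (PIpos := PI_RGT_0).
  assert (Hs : 0 < sin (PI * a)) by (apply sin_gt_0; nra).
  apply is_lim_seq_le_le with (u := fun N => PI / sin (PI * a) - (2 * PI / sin (PI * a)) / (INR N + 1))
                              (w := fun N => PI / sin (PI * a)).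
  - intros N. assert (E := err a N Ha). rewrite S_INR in *.
    assert (Hn : 0 < INR N + 1) by (assert (Hp := pos_INR N); lra).
    set (SP := sum_f_R0 (Pf a) N) in *. set (S := sin (PI * a)) in *.
    split.
    + replace (PI / S - 2 * PI / S / (INR N + 1)) with (((INR N + 1) * PI - 2 * PI) / (S * (INR N + 1))) by (field; lra).
      replace (SP / (INR N + 1)) with ((S * SP) / (S * (INR N + 1))) by (field; lra).
      unfold Rdiv. apply Rmult_le_compat_r. left. apply Rinv_0_lt_compat. nra. lra.
    + replace (PI / S) with (((INR N + 1) * PI) / (S * (INR N + 1))) by (field; lra).
      replace (SP / (INR N + 1)) with ((S * SP) / (S * (INR N + 1))) by (field; lra).
      unfold Rdiv. apply Rmult_le_compat_r. left. apply Rinv_0_lt_compat. nra. lra.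
  - replace (Finite (PI / sin (PI * a))) with (Finite (PI / sin (PI * a) - 0)) by (f_equal; ring).
    apply is_lim_seq_minus'. apply is_lim_seq_const. apply lim_inv. lra.
  - apply is_lim_seq_const.
Qed.

Lemma Pf_lim a (L : R) : 0 < a < 1 -> is_lim_seq (Pf a) L -> L = PI / sin (PI * a).
Proof.
  intros Ha HL. apply is_lim_seq_Reals in HL.
  assert (HC := Cesaro_1 _ _ HL). apply is_lim_seq_Reals in HC.
  apply is_lim_seq_incr_1 in HC.
  assert (H2 := cesaro_lim a Ha).
  apply is_lim_seq_unique in HC. apply is_lim_seq_unique in H2.
  assert (E : Lim_seq (fun n => sum_f_R0 (Pf a) (Init.Nat.pred (S n)) / INR (S n)) =
              Lim_seq (fun N => sum_f_R0 (Pf a) N / INR (S N))) by reflexivity.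
  rewrite E, H2 in HC. injection HC. auto.
Qed.

Lemma sinc_pos tau k : 0 < tau < 1 ->
  sinc (INR (S k) - tau) = (-1)^k * (sin (PI * tau) / PI) / (INR (S k) - tau).
Proof.
  intros Ht. assert (H1 : 1 <= INR (S k)) by (apply (le_INR 1); lia).
  assert (PIpos := PI_RGT_0).
  unfold sinc. destruct (Req_EM_T (INR (S k) - tau) 0) as [E|E]; [lra|].
  replace (PI * (INR (S k) - tau)) with (- (PI * tau) + INR (S k) * PI) by ring.
  rewrite sin_shift, sin_neg. change ((-1)^(S k)) with (-1 * (-1)^k). field. repeat split; nra.
Qed.

Lemma sinc_neg tau k : 0 < tau < 1 ->
  sinc (- INR (S k) - tau) = (-1)^(S k) * (sin (PI * tau) / PI) / (INR (S k) + tau).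
Proof.
  intros Ht. assert (H1 : 1 <= INR (S k)) by (apply (le_INR 1); lia).
  assert (PIpos := PI_RGT_0).
  unfold sinc. destruct (Req_EM_T (- INR (S k) - tau) 0) as [E|E]; [lra|].
  replace (PI * (- INR (S k) - tau)) with (- (PI * tau) - INR (S k) * PI) by ring.
  rewrite sin_shiftm, sin_neg. field. repeat split; nra.
Qed.

Lemma sinc_tau tau : 0 < tau < 1 -> sinc tau = (sin (PI * tau) / PI) / tau.
Proof.
  intros Ht. assert (PIpos := PI_RGT_0). unfold sinc.
  destruct (Req_EM_T tau 0); [lra|]. field. split; lra.
Qed.

Lemma tele_series : is_series (fun k => / (INR (S k) * INR (S (S k)))) 1.
Proof.
  apply is_series_Reals. change (Un_cv (sum_f_R0 (fun k => / (INR (S k) * INR (S (S k))))) 1).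
  apply is_lim_seq_Reals.
  apply is_lim_seq_ext with (u := fun N => 1 - 1 / (INR N + 2)).
  - intros N. induction N as [|N IH].
    + simpl. field.
    + cbn [sum_f_R0]. rewrite <- IH. rewrite !S_INR.
      assert (0 <= INR N) by apply pos_INR. field. lra.
  - replace (Finite 1) with (Finite (1 - 0)) by (f_equal; ring).
    apply is_lim_seq_minus'. apply is_lim_seq_const. apply lim_inv. lra.
Qed.

Lemma ex_inv2 : ex_series (fun k => / (INR (S k))^2).
Proof.
  apply (@ex_series_le R_AbsRing R_CompleteNormedModule _ (fun k => 2 * / (INR (S k) * INR (S (S k))))).
  - intros k. change (norm (/ INR (S k) ^ 2)) with (Rabs (/ INR (S k) ^ 2)).
    rewrite Rabs_right.
    + rewrite !S_INR. assert (0 <= INR k) by apply pos_INR.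
      replace (2 * / ((INR k + 1) * (INR k + 1 + 1))) with (/ ((INR k + 1) * (INR k + 1 + 1) / 2)) by (field; lra).
      apply Rinv_le_contravar. apply Rdiv_lt_0_compat; nra. simpl. nra.
    + left. apply Rinv_0_lt_compat. apply pow_lt. apply lt_0_INR. lia.
  - assert (H : ex_series (fun k => scal 2 (/ (INR (S k) * INR (S (S k)))))).
    { apply (@ex_series_scal_l R_AbsRing R_NormedModule 2). eexists. exact tele_series. }
    exact H.
Qed.

Lemma ex_gen b n (e : nat -> R) : 0 < b -> (2 <= n)%nat -> (forall k, Rabs (e k) <= 1) ->
  ex_series (fun k => e k / (INR k + b)^n).
Proof.
  intros Hb Hn He. apply ex_series_incr_1.
  apply (@ex_series_le R_AbsRing R_CompleteNormedModule _ (fun k => / (INR (S k))^2)); [| exact ex_inv2].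
  intros k. change (norm (e (S k) / (INR (S k) + b) ^ n)) with (Rabs (e (S k) / (INR (S k) + b) ^ n)).
  assert (H1 : 1 <= INR (S k)) by (apply (le_INR 1); lia).
  set (x := INR (S k) + b).
  assert (Hx : 1 <= x) by (unfold x; lra).
  assert (Hxn : x^2 <= x^n) by (apply Rle_pow; auto).
  assert (Hx2 : INR (S k) ^ 2 <= x ^ 2) by (apply pow_incr; unfold x; lra).
  unfold Rdiv. rewrite Rabs_mult, Rabs_inv, (Rabs_right (x^n)) by (left; apply pow_lt; lra).
  apply Rle_trans with (1 * / x^n).
  - apply Rmult_le_compat_r; auto. left. apply Rinv_0_lt_compat. apply pow_lt; lra.
  - rewrite Rmult_1_l. apply Rinv_le_contravar. apply pow_lt; lra. lra.
Qed.

Lemma ex_alt b : 0 < b -> ex_series (fun k => (-1)^k / (INR k + b)).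
Proof.
  intros Hb.
  destruct (alternated_series (fun k => / (INR k + b))) as [l Hl].
  - intros k. rewrite S_INR. assert (0 <= INR k) by apply pos_INR.
    apply Rinv_le_contravar; lra.
  - apply is_lim_seq_Reals. apply is_lim_seq_ext with (u := fun k => 1 / (INR k + b)).
    + intros k. unfold Rdiv. ring.
    + apply lim_inv; auto.
  - exists l. apply is_series_Reals. exact Hl.
Qed.

Lemma series_shift c n (e : nat -> R) : 0 < c + 1 -> (2 <= n)%nat -> (forall k, Rabs (e k) <= 1) ->
  Series (fun k => e k / (INR k + c)^n) = e 0%nat / c^n + Series (fun k => e (S k) / (INR k + (c + 1))^n).
Proof.
  intros Hc Hn He.
  rewrite Series_incr_1.
  - f_equal. simpl INR. rewrite Rplus_0_l. reflexivity.
    apply Series_ext. intros k. rewrite S_INR. f_equal. f_equal. ring.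
  - apply ex_series_incr_1.
    apply ex_series_ext with (a := fun k => e (S k) / (INR k + (c + 1))^n).
    + intros k. rewrite S_INR. f_equal. f_equal. ring.
    + apply ex_gen; auto.
Qed.

Lemma pos_form n tau k : 0 < tau < 1 ->
  G_pos n tau k = (sin (PI * tau) / PI)^n * (((-1)^k)^n / (INR k + (- tau + 1))^n).
Proof.
  intros Ht. unfold G_pos. rewrite sinc_pos by auto.
  replace (INR (S k) - tau) with (INR k + (- tau + 1)) by (rewrite S_INR; ring).
  unfold Rdiv. rewrite !Rpow_mult_distr, !pow_inv. ring.
Qed.

Lemma neg_form n tau k : 0 < tau < 1 ->
  G_neg n tau k = (sin (PI * tau) / PI)^n * (((-1)^(S k))^n / (INR k + (tau + 1))^n).
Proof.
  intros Ht. unfold G_neg. rewrite sinc_neg by auto.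
  replace (INR (S k) + tau) with (INR k + (tau + 1)) by (rewrite S_INR; ring).
  unfold Rdiv. rewrite !Rpow_mult_distr, !pow_inv. ring.
Qed.

Lemma abs_m1 k n : Rabs (((-1)^k)^n) <= 1.
Proof. rewrite <- pow_mult, pow_1_abs. lra. Qed.

Lemma m1_swap k n : ((-1)^k)^n = ((-1)^n)^k.
Proof. rewrite <- !pow_mult, Nat.mul_comm. reflexivity. Qed.

Lemma ex_series_ext_R (a b : nat -> R) : (forall n, a n = b n) -> ex_series a -> ex_series b.
Proof. intros H. apply ex_series_ext. exact H. Qed.

Lemma ex_pos_neg n tau : (1 <= n)%nat -> 0 < tau < 1 ->
  ex_series (G_pos n tau) /\ ex_series (G_neg n tau).
Proof.
  intros Hn Ht. set (s := sin (PI * tau) / PI).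
  destruct (Nat.eq_dec n 1) as [->|Hn2].
  - split.
    + apply ex_series_ext_R with (a := fun k => s * ((-1)^k / (INR k + (- tau + 1)))).
      * intros k. rewrite pos_form by auto. unfold s. rewrite !pow_1. reflexivity.
      * assert (H : ex_series (fun k => scal s ((-1)^k / (INR k + (- tau + 1))))).
        { apply (@ex_series_scal_l R_AbsRing R_NormedModule). apply ex_alt. lra. }
        exact H.
    + apply ex_series_ext_R with (a := fun k => (- s) * ((-1)^k / (INR k + (tau + 1)))).
      * intros k. rewrite neg_form by auto. unfold s. rewrite !pow_1.
        change ((-1)^(S k)) with (-1 * (-1)^k). unfold Rdiv. ring.
      * assert (H : ex_series (fun k => scal (- s) ((-1)^k / (INR k + (tau + 1))))).
        { apply (@ex_series_scal_l R_AbsRing R_NormedModule). apply ex_alt. lra. }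
        exact H.
  - assert (Hn' : (2 <= n)%nat) by lia. split.
    + apply ex_series_ext_R with (a := fun k => s^n * (((-1)^k)^n / (INR k + (- tau + 1))^n)).
      * intros k. rewrite pos_form by auto. reflexivity.
      * assert (H : ex_series (fun k => scal (s^n) (((-1)^k)^n / (INR k + (- tau + 1))^n))).
        { apply (@ex_series_scal_l R_AbsRing R_NormedModule). apply ex_gen; auto. lra.
          intros; apply abs_m1. }
        exact H.
    + apply ex_series_ext_R with (a := fun k => s^n * (((-1)^(S k))^n / (INR k + (tau + 1))^n)).
      * intros k. rewrite neg_form by auto. reflexivity.
      * assert (H : ex_series (fun k => scal (s^n) (((-1)^(S k))^n / (INR k + (tau + 1))^n))).
        { apply (@ex_series_scal_l R_AbsRing R_NormedModule). apply ex_gen; auto. lra.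
          intros; apply abs_m1. }
        exact H.
Qed.

Lemma case1 tau : 0 < tau < 1 -> G 1 tau = 1 - sinc tau.
Proof.
  intros Ht. destruct (ex_pos_neg 1 tau (le_n 1) Ht) as [Ep En].
  assert (PIpos := PI_RGT_0).
  assert (Hsin : 0 < sin (PI * tau)) by (apply sin_gt_0; nra).
  set (s := sin (PI * tau) / PI).
  assert (Hs : 0 < s) by (unfold s; apply Rdiv_lt_0_compat; auto).
  set (h := fun k => G_pos 1 tau k + G_neg 1 tau k).
  assert (HG : G 1 tau = Series h) by (unfold G, h; rewrite Series_plus; auto).
  assert (Hh : forall k, h k = s * (Pf tau (S k) - Pf tau k)).
  { intros k. unfold h. rewrite pos_form, neg_form by auto. fold s.
    change (Pf tau (S k)) with (Pf tau k + (-1)^(S k) * (2 * tau / (tau^2 - (INR (S k))^2))).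
    change ((-1)^(S k)) with (-1 * (-1)^k). rewrite S_INR.
    assert (0 <= INR k) by apply pos_INR.
    field. repeat split; try lra. nra. }
  assert (Hsum : forall N, sum_f_R0 h N = s * (Pf tau (S N) - / tau)).
  { intros N. induction N as [|N IH].
    - simpl sum_f_R0. rewrite Hh. reflexivity.
    - cbn [sum_f_R0]. rewrite IH, Hh. ring. }
  assert (Hex : ex_series h) by (apply (ex_series_plus (G_pos 1 tau) (G_neg 1 tau)); auto).
  assert (Hser := Series_correct h Hex).
  apply is_series_Reals in Hser. change (Un_cv (sum_f_R0 h) (Series h)) in Hser.
  apply is_lim_seq_Reals in Hser.
  assert (HL : is_lim_seq (Pf tau) (Series h * / s + / tau)).
  { apply is_lim_seq_incr_1.
    apply is_lim_seq_ext with (u := fun N => sum_f_R0 h N * / s + / tau).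
    - intros N. rewrite Hsum. field. lra.
    - apply is_lim_seq_plus'. apply is_lim_seq_mult'. exact Hser. apply is_lim_seq_const.
      apply is_lim_seq_const. }
  apply Pf_lim in HL; [|auto].
  rewrite HG, sinc_tau by auto. fold s.
  assert (E : Series h = s * (PI / sin (PI * tau)) - s / tau).
  { rewrite <- HL. field. lra. }
  rewrite E. unfold s. field. split; lra.
Qed.

Lemma case_gen n tau (eps : R) : (2 <= n)%nat -> 0 < tau < 1 -> (-1)^n = eps ->
  let s := sin (PI * tau) / PI in
  Series (G_pos n tau) = s^n * Series (fun k => ((-1)^k)^n / (INR k + (- tau + 1))^n) /\
  Series (G_neg n tau) = s^n * Series (fun k => ((-1)^(S k))^n / (INR k + (tau + 1))^n).
Proof.
  intros Hn Ht He s. split.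
  - rewrite <- Series_scal_l. apply Series_ext. intros k. apply pos_form; auto.
  - rewrite <- Series_scal_l. apply Series_ext. intros k. apply neg_form; auto.
Qed.

Lemma case_even n tau : (2 <= n)%nat -> 0 < tau < 1 -> Nat.even n = true ->
  G n tau = sinc tau ^ n * (tau ^ n * (hurwitz_zeta n tau + hurwitz_zeta n (- tau)) - 2).
Proof.
  intros Hn Ht Hev.
  assert (He : (-1)^n = 1).
  { apply Nat.even_spec in Hev. destruct Hev as [m ->]. apply pow_1_even. }
  destruct (case_gen n tau 1 Hn Ht He) as [Hp Hm].
  set (s := sin (PI * tau) / PI) in *.
  unfold G. rewrite Hp, Hm.
  assert (Z1 : hurwitz_zeta n tau = 1 / tau^n + Series (fun k => 1 / (INR k + (tau + 1))^n)).
  { unfold hurwitz_zeta.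
    rewrite (Series_ext _ (fun k => (fun _ => 1) k / (INR k + tau)^n)) by (intros; unfold Rdiv; ring).
    rewrite series_shift; auto. lra. intros; rewrite Rabs_R1; lra. }
  assert (Z2 : hurwitz_zeta n (- tau) = 1 / (- tau)^n + Series (fun k => 1 / (INR k + (- tau + 1))^n)).
  { unfold hurwitz_zeta.
    rewrite (Series_ext _ (fun k => (fun _ => 1) k / (INR k + - tau)^n)) by (intros; unfold Rdiv; ring).
    rewrite series_shift; auto. lra. intros; rewrite Rabs_R1; lra. }
  rewrite Z1, Z2.
  rewrite (Series_ext (fun k => ((-1)^k)^n / (INR k + (- tau + 1))^n) (fun k => 1 / (INR k + (- tau + 1))^n))
    by (intros k; rewrite m1_swap, He, pow1; reflexivity).
  rewrite (Series_ext (fun k => ((-1)^(S k))^n / (INR k + (tau + 1))^n) (fun k => 1 / (INR k + (tau + 1))^n))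
    by (intros k; rewrite m1_swap, He, pow1; reflexivity).
  assert (Et : (- tau)^n = tau^n) by (replace (- tau) with (-1 * tau) by ring; rewrite Rpow_mult_distr, He; ring).
  rewrite Et, sinc_tau by auto. fold s.
  assert (Htn : tau^n <> 0) by (apply pow_nonzero; lra).
  unfold Rdiv at 3. rewrite Rpow_mult_distr, pow_inv.
  field. auto.
Qed.

Lemma case_odd n tau : (3 <= n)%nat -> 0 < tau < 1 -> Nat.odd n = true ->
  G n tau = sinc tau ^ n * (tau ^ n * (alt_hurwitz_zeta n tau - alt_hurwitz_zeta n (- tau)) - 2).
Proof.
  intros Hn Ht Hod.
  assert (He : (-1)^n = -1).
  { apply Nat.odd_spec in Hod. destruct Hod as [m ->].
    rewrite pow_add, pow_1_even. ring. }
  destruct (case_gen n tau (-1) ltac:(lia) Ht He) as [Hp Hm].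
  set (s := sin (PI * tau) / PI) in *.
  unfold G. rewrite Hp, Hm.
  assert (Hab : forall k, Rabs ((-1)^k) <= 1) by (intros; rewrite pow_1_abs; lra).
  assert (Z1 : alt_hurwitz_zeta n tau = (-1)^0 / tau^n + Series (fun k => (-1)^(S k) / (INR k + (tau + 1))^n)).
  { unfold alt_hurwitz_zeta. rewrite series_shift; auto. lra. lia. }
  assert (Z2 : alt_hurwitz_zeta n (- tau) = (-1)^0 / (- tau)^n + Series (fun k => (-1)^(S k) / (INR k + (- tau + 1))^n)).
  { unfold alt_hurwitz_zeta. rewrite series_shift; auto. lra. lia. }
  rewrite Z1, Z2.
  rewrite (Series_ext (fun k => ((-1)^k)^n / (INR k + (- tau + 1))^n) (fun k => (-1) * ((-1)^(S k) / (INR k + (- tau + 1))^n)))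
    by (intros k; rewrite m1_swap, He; change ((-1)^(S k)) with (-1 * (-1)^k); unfold Rdiv; ring).
  rewrite Series_scal_l.
  rewrite (Series_ext (fun k => ((-1)^(S k))^n / (INR k + (tau + 1))^n) (fun k => (-1)^(S k) / (INR k + (tau + 1))^n))
    by (intros k; rewrite m1_swap, He; reflexivity).
  assert (Et : (- tau)^n = - tau^n) by (replace (- tau) with (-1 * tau) by ring; rewrite Rpow_mult_distr, He; ring).
  rewrite Et, sinc_tau by auto. fold s.
  assert (Htn : tau^n <> 0) by (apply pow_nonzero; lra).
  replace ((s / tau)^n) with (s^n / tau^n) by (unfold Rdiv; rewrite Rpow_mult_distr, pow_inv; reflexivity). change ((-1)^0) with 1.
  field. auto.
Qed.

Theorem lemma1 (n : nat) (tau : R) (hn : (1 <= n)%nat) (htau : 0 < tau < 1) :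
  ex_series (G_pos n tau) /\ ex_series (G_neg n tau) /\
  (n = 1%nat -> G n tau = 1 - sinc tau) /\
  (Nat.even n = true ->
     G n tau = sinc tau ^ n *
       (tau ^ n * (hurwitz_zeta n tau + hurwitz_zeta n (- tau)) - 2)) /\
  (Nat.odd n = true -> (3 <= n)%nat ->
     G n tau = sinc tau ^ n *
       (tau ^ n * (alt_hurwitz_zeta n tau - alt_hurwitz_zeta n (- tau)) - 2)).
Proof.
  destruct (ex_pos_neg n tau hn htau) as [E1 E2].
  split; [exact E1|]. split; [exact E2|]. split; [|split].
  - intros ->. apply case1; auto.
  - intros Hev. apply case_even; auto.
    destruct (Nat.eq_dec n 1) as [->|]; [discriminate | lia].
  - intros Hod H3. apply case_odd; auto.
Qed.
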